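(* Let $f:E\to\mathbb{R}$ be either convex or continuously differentiable (possibly non-convex), and let $\varepsilon>0$. Then the iterates of Algorithm UAGMsDR with accuracy $\varepsilon$ satisfy, for every $k\ge0$, $$A_kf(x^k)\le\min_{x\in E}\psi_k(x)+\frac{A_k\varepsilon}{2}=\psi_k(v^k)+\frac{A_k\varepsilon}{2},$$ and $$A_k\ge\sup_{\nu\in[0,1]:\,M_\nu<\infty}\ c_\nu\,\frac{k^{\frac{1+3\nu}{1+\nu}}\,\varepsilon^{\frac{1-\nu}{1+\nu}}}{2^{\frac{1+3\nu}{1+\nu}}\,M_\nu^{\frac{2}{1+\nu}}},\qquad c_\nu=\left[\frac{1+\nu}{1-\nu}\right]^{\frac{1-\nu}{1+\nu}}\ (\nu<1),\ c_1=1.$$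
   Context: $E$ is a finite-dimensional real vector space with a norm $\|\cdot\|$; $E^*$ is its dual, $\langle g,x\rangle$ denotes the value of $g\in E^*$ at $x\in E$, and $\|g\|_*=\max\{\langle g,x\rangle:\|x\|\le 1\}$. For $g\in E^*$, $g^{\#}$ denotes a (fixed) element $s\in E$ with $\|s\|\le 1$ and $\langle g,s\rangle=\|g\|_*$. A prox-function $d:E\to\mathbb{R}$ is continuously differentiable, convex, $1$-strongly convex with respect to $\|\cdot\|$ and satisfies $\min_E d=0$; its Bregman divergence is $V(x,z)=d(x)-d(z)-\langle\nabla d(z),x-z\rangle$. $\nabla f(x)$ denotes the gradient of $f$ if $f$ is differentiable and otherwise a subgradient of the convex function $f$ (as selected by the algorithm). For $\nu\in[0,1]$, $M_\nu\in(0,+\infty]$ denotes the smallest constant such that $\|\nabla f(x)-\nabla f(y)\|_*\le M_\nu\|x-y\|^\nu$ for all $x,y\in E$ (Hölder continuity of the (sub)gradient; $M_\nu=+\infty$ if no such constant exists). Algorithm UAGMsDR (input $x^0\in E$, accuracy $\varepsilon>0$): set $A_0=0$, $v^0=x^0$, $\psi_0(x)=V(x,x^0)$. For $k=0,1,2,\dots$: 1. Choose $\beta_k\in\arg\min_{\beta\in[0,1]}f(v^k+\beta(x^k-v^k))$, set $y^k=v^k+\beta_k(x^k-v^k)$, and choose $\nabla f(y^k)$ (the gradient, or a subgradient in the convex nonsmooth case) such that $\langle\nabla f(y^k),v^k-y^k\rangle\ge0$ (such a choice exists by optimality of $\beta_k$). 2. $h_{k+1}\in\arg\min_{h\ge0}f(y^k-h(\nabla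 f(y^k))^{\#})$, $x^{k+1}=y^k-h_{k+1}(\nabla f(y^k))^{\#}$; $a_{k+1}$ is the largest solution of $f(y^k)-\frac{a_{k+1}^2}{2(A_k+a_{k+1})}\|\nabla f(y^k)\|_*^2+\frac{\varepsilon a_{k+1}}{2(A_k+a_{k+1})}=f(x^{k+1})$. 3. $A_{k+1}=A_k+a_{k+1}$; $\psi_{k+1}(x)=\psi_k(x)+a_{k+1}\{f(y^k)+\langle\nabla f(y^k),x-y^k\rangle\}$; $v^{k+1}=\arg\min_{x\in E}\psi_{k+1}(x)$. All minima are assumed attained, and $\nabla f(y^k)\ne0$ for all iterations considered. *)

(* Defs.v *)
(* classical reals. E is modelled as R^n = (Fin.t n -> R),
   E* is identified with R^n via the standard pairing. *)
From Stdlib Require Import Reals Lra Classical ClassicalEpsilon FunctionalExtensionality.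
From Stdlib Require Vectors.Fin.
Open Scope R_scope.

Definition Vec (n : nat) := Fin.t n -> R.

Fixpoint fsum (n : nat) : (Fin.t n -> R) -> R :=
  match n with
  | O => fun _ => 0
  | S m => fun f => f Fin.F1 + fsum m (fun i => f (Fin.FS i))
  end.

Definition vadd {n} (x y : Vec n) : Vec n := fun i => x i + y i.
Definition vsub {n} (x y : Vec n) : Vec n := fun i => x i - y i.
Definition vscal {n} (c : R) (x : Vec n) : Vec n := fun i => c * x i.
Definition vzero {n} : Vec n := fun _ => 0.

Definition pair {n} (g x : Vec n) : R := fsum n (fun i => g i * x i).

Definition is_norm {n} (N : Vec n -> R) : Prop :=
  (forall x, 0 <= N x) /\
  (forall x, N x = 0 -> x = vzero) /\
  (forall c x, N (vscal c x) = Rabs c * N x) /\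
  (forall x y, N (vadd x y) <= N x + N y).

Definition is_dual_norm_val {n} (N : Vec n -> R) (g : Vec n) (r : R) : Prop :=
  (exists x, N x <= 1 /\ pair g x = r) /\ (forall x, N x <= 1 -> pair g x <= r).

Definition dnorm {n} (N : Vec n -> R) (g : Vec n) : R :=
  epsilon (inhabits 0) (is_dual_norm_val N g).

Definition is_sharp {n} (N : Vec n -> R) (sharp : Vec n -> Vec n) : Prop :=
  forall g, N (sharp g) <= 1 /\ pair g (sharp g) = dnorm N g.

Definition convex {n} (f : Vec n -> R) : Prop :=
  forall x y t, 0 <= t <= 1 ->
    f (vadd (vscal t x) (vscal (1 - t) y)) <= t * f x + (1 - t) * f y.

Definition is_subgrad {n} (f : Vec n -> R) (x g : Vec n) : Prop :=
  forall y, f y >= f x + pair g (vsub y x).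

Definition has_grad {n} (N : Vec n -> R) (f : Vec n -> R) (G : Vec n -> Vec n) : Prop :=
  forall x eps, 0 < eps -> exists delta, 0 < delta /\
    forall h, N h < delta ->
      Rabs (f (vadd x h) - f x - pair (G x) h) <= eps * N h.

Definition grad_cont {n} (N : Vec n -> R) (G : Vec n -> Vec n) : Prop :=
  forall x eps, 0 < eps -> exists delta, 0 < delta /\
    forall y, N (vsub y x) < delta -> dnorm N (vsub (G y) (G x)) < eps.

Definition C1_grad {n} (N : Vec n -> R) (f : Vec n -> R) (G : Vec n -> Vec n) : Prop :=
  has_grad N f G /\ grad_cont N G.

Definition prox_fun {n} (N : Vec n -> R) (d : Vec n -> R) (Dd : Vec n -> Vec n) : Prop :=
  C1_grad N d Dd /\ convex d /\
  (forall x y, d y >= d x + pair (Dd x) (vsub y x) + / 2 * (N (vsub y x)) ^ 2) /\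
  (forall x, 0 <= d x) /\ (exists x, d x = 0).

Definition bregman {n} (d : Vec n -> R) (Dd : Vec n -> Vec n) (x z : Vec n) : R :=
  d x - d z - pair (Dd z) (vsub x z).

(* real power with the conventions 0^0 = 1 and 0^a = 0 for a <> 0 *)
Definition hpow (x a : R) : R :=
  if Req_EM_T x 0 then (if Req_EM_T a 0 then 1 else 0) else Rpower x a.

Definition holder {n} (N : Vec n -> R) (D : Vec n -> Vec n) (nu M : R) : Prop :=
  forall x y, dnorm N (vsub (D x) (D y)) <= M * hpow (N (vsub x y)) nu.

Definition c_nu (nu : R) : R :=
  if Rlt_dec nu 1 then Rpower ((1 + nu) / (1 - nu)) ((1 - nu) / (1 + nu)) else 1.

Definition a_eq (fy fx G eps Ak a : R) : Prop :=
  Ak + a <> 0 /\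
  fy - a ^ 2 / (2 * (Ak + a)) * G ^ 2 + eps * a / (2 * (Ak + a)) = fx.

Definition UAGMsDR_run {n} (N : Vec n -> R) (f : Vec n -> R) (D : Vec n -> Vec n)
  (sharp : Vec n -> Vec n) (d : Vec n -> R) (Dd : Vec n -> Vec n) (eps : R)
  (x v y : nat -> Vec n) (beta h a A : nat -> R) (psi : nat -> Vec n -> R) : Prop :=
  A 0%nat = 0 /\ v 0%nat = x 0%nat /\
  psi 0%nat = (fun z => bregman d Dd z (x 0%nat)) /\
  forall k : nat,
    (0 <= beta k <= 1 /\
     (forall b, 0 <= b <= 1 ->
        f (vadd (v k) (vscal (beta k) (vsub (x k) (v k))))
        <= f (vadd (v k) (vscal b (vsub (x k) (v k)))))) /\
    y k = vadd (v k) (vscal (beta k) (vsub (x k) (v k))) /\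
    pair (D (y k)) (vsub (v k) (y k)) >= 0 /\
    (0 <= h (S k) /\
     (forall h', 0 <= h' ->
        f (vsub (y k) (vscal (h (S k)) (sharp (D (y k)))))
        <= f (vsub (y k) (vscal h' (sharp (D (y k))))))) /\
    x (S k) = vsub (y k) (vscal (h (S k)) (sharp (D (y k)))) /\
    a_eq (f (y k)) (f (x (S k))) (dnorm N (D (y k))) eps (A k) (a (S k)) /\
    (forall a', a_eq (f (y k)) (f (x (S k))) (dnorm N (D (y k))) eps (A k) a' ->
        a' <= a (S k)) /\
    A (S k) = A k + a (S k) /\
    psi (S k) = (fun z => psi k z + a (S k) * (f (y k) + pair (D (y k)) (vsub z (y k)))) /\
    (forall z, psi (S k) (v (S k)) <= psi (S k) z).

(* Main.v *)
Require Import Defs.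
From Stdlib Require Import Reals Lra Lia Psatz Classical ClassicalEpsilon FunctionalExtensionality.
Open Scope R_scope.

Lemma fsum_plus n (f g : Fin.t n -> R) : fsum n (fun i => f i + g i) = fsum n f + fsum n g.
Proof. induction n; simpl. - lra. - rewrite (IHn (fun i => f (Fin.FS i)) (fun i => g (Fin.FS i))). lra. Qed.

Lemma fsum_scal n c (f : Fin.t n -> R) : fsum n (fun i => c * f i) = c * fsum n f.
Proof. induction n; simpl. - lra. - rewrite (IHn (fun i => f (Fin.FS i))). lra. Qed.

Lemma fsum_ext n (f g : Fin.t n -> R) : (forall i, f i = g i) -> fsum n f = fsum n g.
Proof. intros H. f_equal. apply functional_extensionality. exact H. Qed.

Lemma pair_add_r n (g x y : Vec n) : pair g (vadd x y) = pair g x + pair g y.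
Proof. unfold pair, vadd. rewrite <- fsum_plus. apply fsum_ext. intros; ring. Qed.

Lemma pair_scal_r n (g : Vec n) c x : pair g (vscal c x) = c * pair g x.
Proof. unfold pair, vscal. rewrite <- fsum_scal. apply fsum_ext. intros; ring. Qed.

Lemma pair_add_l n (g h x : Vec n) : pair (vadd g h) x = pair g x + pair h x.
Proof. unfold pair, vadd. rewrite <- fsum_plus. apply fsum_ext. intros; ring. Qed.

Lemma pair_scal_l n (g : Vec n) c x : pair (vscal c g) x = c * pair g x.
Proof. unfold pair, vscal. rewrite <- fsum_scal. apply fsum_ext. intros; ring. Qed.

Lemma pair_sub_r n (g x y : Vec n) : pair g (vsub x y) = pair g x - pair g y.
Proof.
  replace (vsub x y) with (vadd x (vscal (-1) y)).
  - rewrite pair_add_r, pair_scal_r. ring.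
  - apply functional_extensionality; intro i; unfold vadd, vscal, vsub; ring.
Qed.

Lemma pair_sub_l n (g h x : Vec n) : pair (vsub g h) x = pair g x - pair h x.
Proof.
  replace (vsub g h) with (vadd g (vscal (-1) h)).
  - rewrite pair_add_l, pair_scal_l. ring.
  - apply functional_extensionality; intro i; unfold vadd, vscal, vsub; ring.
Qed.

Lemma pair_zero_r n (g : Vec n) : pair g vzero = 0.
Proof.
  replace (@vzero n) with (vscal 0 (@vzero n)).
  - rewrite pair_scal_r; ring.
  - apply functional_extensionality; intro i; unfold vzero, vscal; ring.
Qed.

Lemma N_zero n (N : Vec n -> R) : is_norm N -> N vzero = 0.
Proof.
  intros [_ [_ [Hh _]]].
  replace (@vzero n) with (vscal 0 (@vzero n)).
  - rewrite Hh, Rabs_R0; ring.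
  - apply functional_extensionality; intro i; unfold vzero, vscal; ring.
Qed.

Lemma N_scal n (N : Vec n -> R) c x : is_norm N -> N (vscal c x) = Rabs c * N x.
Proof. intros [_ [_ [Hh _]]]; apply Hh. Qed.

Lemma N_ge0 n (N : Vec n -> R) x : is_norm N -> 0 <= N x.
Proof. intros [H _]; apply H. Qed.

Lemma N_sub_sym n (N : Vec n -> R) x y : is_norm N -> N (vsub x y) = N (vsub y x).
Proof.
  intros HN. replace (vsub x y) with (vscal (Ropp 1) (vsub y x)).
  - rewrite N_scal by auto. rewrite Rabs_Ropp, Rabs_R1; ring.
  - apply functional_extensionality; intro i; unfold vsub, vscal; ring.
Qed.

Lemma sc_min n (N : Vec n -> R) d Dd (al : Vec n) (be : R) (v z : Vec n) :
  is_norm N -> prox_fun N d Dd ->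
  (forall w, d v + pair al v + be <= d w + pair al w + be) ->
  d v + pair al v + be + / 2 * (N (vsub z v)) ^ 2 <= d z + pair al z + be.
Proof.
  intros HN [_ [_ [Hsc _]]] Hmin.
  set (F := fun w => d w + pair al w + be).
  set (nn := N (vsub z v)).
  assert (Hnn : 0 <= nn) by (apply N_ge0; auto).
  assert (Hfv : F v <= F z) by (apply Hmin).
  assert (Ht : forall t, 0 < t <= 1 -> F v <= F z - / 2 * (1 - t) * nn ^ 2).
  { intros t Ht.
    set (w := vadd (vscal t z) (vscal (1 - t) v)).
    assert (E1 : vsub z w = vscal (1 - t) (vsub z v)).
    { apply functional_extensionality; intro i; unfold w, vsub, vadd, vscal; ring. }
    assert (E2 : vsub v w = vscal (- t) (vsub z v)).
    { apply functional_extensionality; intro i; unfold w, vsub, vadd, vscal; ring. }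
    pose proof (Hsc w z) as I1. pose proof (Hsc w v) as I2.
    rewrite E1 in I1. rewrite E2 in I2.
    rewrite pair_scal_r, N_scal in I1 by auto.
    rewrite pair_scal_r, N_scal in I2 by auto.
    rewrite Rabs_pos_eq in I1 by lra.
    rewrite Rabs_Ropp, Rabs_pos_eq in I2 by lra.
    fold nn in I1, I2.
    assert (Hw : pair al w = t * pair al z + (1 - t) * pair al v).
    { unfold w. rewrite pair_add_r, !pair_scal_r. ring. }
    pose proof (Hmin w) as Hm. fold (F v) (F w) in Hm.
    assert (Fw : F w <= t * F z + (1 - t) * F v - / 2 * t * (1 - t) * nn ^ 2).
    { unfold F. rewrite Hw. apply Rge_le in I1. apply Rge_le in I2.
      set (P := pair (Dd w) (vsub z v)) in *.
      nra. }
    assert (t * F v <= t * (F z - / 2 * (1 - t) * nn ^ 2)) by nra.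
    apply Rmult_le_reg_l with t; lra. }
  cut (F v + / 2 * nn ^ 2 <= F z). { unfold F, nn; auto. }
  destruct (Req_dec nn 0) as [H0|H0].
  - rewrite H0. lra.
  - assert (Hpos : 0 < nn ^ 2) by (apply pow_lt; lra).
    apply Rnot_lt_le; intro Hc.
    assert (HD : 0 <= F z - F v < / 2 * nn ^ 2) by lra.
    set (t := (/ 2 * nn ^ 2 - (F z - F v)) / nn ^ 2).
    assert (Et : t * nn ^ 2 = / 2 * nn ^ 2 - (F z - F v)).
    { unfold t. field. lra. }
    assert (Htt : 0 < t <= 1).
    { split.
      - unfold t; apply Rdiv_lt_0_compat; lra.
      - apply Rmult_le_reg_r with (nn ^ 2); [lra | rewrite Et; lra]. }
    pose proof (Ht t Htt) as Hx.
    nra.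
Qed.

Definition DualOK {n} (N : Vec n -> R) := forall g, is_dual_norm_val N g (dnorm N g).

Lemma vsub_self n (x : Vec n) : vsub x x = vzero.
Proof. apply functional_extensionality; intro i; unfold vsub, vzero; ring. Qed.

Lemma dnorm_ge0 n (N : Vec n -> R) g : is_norm N -> DualOK N -> 0 <= dnorm N g.
Proof.
  intros HN Hd. destruct (Hd g) as [_ Hm].
  rewrite <- (pair_zero_r n g). apply Hm. rewrite N_zero by auto. lra.
Qed.

Lemma dual_le n (N : Vec n -> R) g x : is_norm N -> DualOK N ->
  pair g x <= dnorm N g * N x.
Proof.
  intros HN Hd. pose proof (dnorm_ge0 n N g HN Hd) as Hg.
  destruct (Req_dec (N x) 0) as [H0|H0].
  - assert (x = vzero) by (destruct HN as [_ [Hdef _]]; auto). subst x. rewrite pair_zero_r, N_zero by auto. lra.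
  - assert (Hp : 0 < N x) by (pose proof (N_ge0 n N x HN); lra).
    destruct (Hd g) as [_ Hm].
    assert (H1 : N (vscal (/ N x) x) <= 1).
    { rewrite N_scal by auto. rewrite Rabs_pos_eq.
      - rewrite Rinv_l by lra. lra.
      - left; apply Rinv_0_lt_compat; lra. }
    pose proof (Hm _ H1) as H2. rewrite pair_scal_r in H2.
    apply Rmult_le_reg_l with (/ N x). { apply Rinv_0_lt_compat; lra. }
    replace (/ N x * (dnorm N g * N x)) with (dnorm N g) by (field; lra). exact H2.
Qed.

Lemma fsum_pos n (f : Fin.t n -> R) : (forall i, 0 <= f i) -> forall i, 0 < f i -> 0 < fsum n f.
Proof.
  induction n as [|n IH]; intros Hnn i Hi.
  - inversion i.
  - simpl. revert Hi. pattern i. apply Fin.caseS'.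
    + intros Hi. assert (0 <= fsum n (fun j => f (Fin.FS j))).
      { clear IH Hi i. induction n as [|n IH2].
        - simpl; lra.
        - simpl. pose proof (Hnn (Fin.FS Fin.F1)).
          pose proof (IH2 (fun j => f (Fin.FS j))) as Hx. simpl in Hx.
          assert (0 <= fsum n (fun j => f (Fin.FS (Fin.FS j)))).
          { apply Hx. intros j. apply Hnn. }
          lra. }
      lra.
    + intros j Hj. pose proof (IH (fun j => f (Fin.FS j)) (fun j => Hnn (Fin.FS j)) j Hj).
      pose proof (Hnn Fin.F1). lra.
Qed.

Lemma dnorm_pos n (N : Vec n -> R) g : is_norm N -> DualOK N -> g <> vzero -> 0 < dnorm N g.
Proof.
  intros HN Hd Hg.
  assert (exists i, g i <> 0) as [i Hi].
  { apply NNPP; intro Hc. apply Hg. apply functional_extensionality; intro i.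
    unfold vzero. apply NNPP; intro Hc2. apply Hc. exists i; auto. }
  assert (Hgg : 0 < pair g g).
  { unfold pair. apply fsum_pos with i.
    - intro j. apply Rle_0_sqr.
    - pose proof (Rsqr_pos_lt (g i) Hi). unfold Rsqr in H; auto. }
  pose proof (dual_le n N g g HN Hd).
  pose proof (dnorm_ge0 n N g HN Hd).
  pose proof (N_ge0 n N g HN).
  destruct H0 as [H0|H0]; auto. rewrite <- H0 in H. lra.
Qed.

Lemma ln_le_mono x y : 0 < x -> x <= y -> ln x <= ln y.
Proof. intros Hx [H|H]. - left; apply ln_increasing; auto. - subst; lra. Qed.

Lemma exp_le_mono x y : x <= y -> exp x <= exp y.
Proof. intros [H|H]. - left; apply exp_increasing; auto. - subst; lra. Qed.

Lemma amgm (X Y th : R) : 0 < X -> 0 < Y -> 0 <= th <= 1 ->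
  exp (th * ln X + (1 - th) * ln Y) <= th * X + (1 - th) * Y.
Proof.
  intros HX HY Hth.
  set (m := th * ln X + (1 - th) * ln Y).
  assert (E1 : X = exp m * exp (ln X - m)).
  { rewrite <- exp_plus. replace (m + (ln X - m)) with (ln X) by ring. rewrite exp_ln; auto. }
  assert (E2 : Y = exp m * exp (ln Y - m)).
  { rewrite <- exp_plus. replace (m + (ln Y - m)) with (ln Y) by ring. rewrite exp_ln; auto. }
  pose proof (exp_ineq1_le (ln X - m)). pose proof (exp_ineq1_le (ln Y - m)).
  pose proof (exp_pos m) as Hm.
  assert (I1 : exp m * (1 + (ln X - m)) <= X) by (rewrite E1 at 2; apply Rmult_le_compat_l; lra).
  assert (I2 : exp m * (1 + (ln Y - m)) <= Y) by (rewrite E2 at 2; apply Rmult_le_compat_l; lra).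
  assert (th * (exp m * (1 + (ln X - m))) <= th * X) by (apply Rmult_le_compat_l; lra).
  assert ((1 - th) * (exp m * (1 + (ln Y - m))) <= (1 - th) * Y) by (apply Rmult_le_compat_l; lra).
  assert (Eq : th * (exp m * (1 + (ln X - m))) + (1 - th) * (exp m * (1 + (ln Y - m))) = exp m).
  { unfold m. ring. }
  lra.
Qed.

Lemma ln_div x y : 0 < x -> 0 < y -> ln (x / y) = ln x - ln y.
Proof. intros; unfold Rdiv; rewrite ln_mult, ln_Rinv; try lra. apply Rinv_0_lt_compat; lra. Qed.

Definition lnC (nu eps M : R) : R :=
  ln (c_nu nu) + (1 - nu) / (1 + nu) * ln eps - 2 / (1 + nu) * ln M.

Lemma ln_c_nu nu : 0 <= nu < 1 ->
  ln (c_nu nu) = (1 - nu) / (1 + nu) * (ln (1 + nu) - ln (1 - nu)).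
Proof.
  intros Hnu. unfold c_nu. destruct (Rlt_dec nu 1) as [_|Hc]; [|lra].
  rewrite ln_Rpower. unfold Rdiv at 2. rewrite ln_mult, ln_Rinv; try lra.
  - apply Rinv_0_lt_compat; lra.
Qed.

Lemma step_log (nu M eps G A a Dl : R) : 0 <= nu <= 1 -> 0 < M -> 0 < eps -> 0 < G ->
  0 <= A -> 0 < a ->
  2 * (A + a) * Dl = a ^ 2 * G ^ 2 - eps * a ->
  (forall t, 0 < t -> t * G - M / (1 + nu) * Rpower t (1 + nu) <= Dl) ->
  (1 + nu) * lnC nu eps M + 2 * nu * ln (A + a) <= (1 + 3 * nu) * ln a.
Proof.
  intros Hnu HM He HG HA Ha E1 E2.
  set (Ap := A + a).
  assert (HAp : 0 < Ap) by (unfold Ap; lra).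
  set (X := a * a / Ap). set (dl := eps * a / Ap).
  assert (HX : 0 < X) by (unfold X; apply Rdiv_lt_0_compat; nra).
  assert (Hdl : 0 < dl) by (unfold dl; apply Rdiv_lt_0_compat; nra).
  assert (E1' : 2 * Dl = X * G ^ 2 - dl).
  { unfold X, dl. apply Rmult_eq_reg_l with Ap; [|lra]. field_simplify; [|lra]. fold Ap in E1. nra. }
  pose proof (E2 (X * G) ltac:(nra)) as E3.
  assert (Hmain : X * G ^ 2 + dl <= 2 * M / (1 + nu) * Rpower (X * G) (1 + nu)).
  { replace (2 * M / (1 + nu)) with (2 * (M / (1 + nu))) by (field; lra). nra. }
  assert (lnX : ln X = 2 * ln a - ln Ap).
  { unfold X, Rdiv. rewrite ln_mult, ln_mult, ln_Rinv; try lra; try nra.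
    apply Rinv_0_lt_compat; lra. }
  assert (lndl : ln dl = ln eps + ln a - ln Ap).
  { unfold dl, Rdiv. rewrite ln_mult, ln_mult, ln_Rinv; try lra; try nra.
    apply Rinv_0_lt_compat; lra. }
  assert (HXG : 0 < X * G) by nra.
  destruct (Req_dec nu 1) as [H1|H1].
  - subst nu.
    replace (1 + 1) with (INR 2) in Hmain by (simpl; ring).
    rewrite Rpower_pow in Hmain by auto.
    assert (HMX : 1 < M * X).
    { assert (X * G ^ 2 < M * X * (X * G ^ 2)).
      { replace (M * X * (X * G ^ 2)) with (2 * M / INR 2 * (X * G) ^ 2) by (simpl; field). lra. }
      assert (0 < X * G ^ 2) by nra. nra. }
    assert (0 < ln (M * X)).
    { rewrite <- ln_1. apply ln_increasing; lra. }
    rewrite ln_mult in H by lra.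
    unfold lnC. unfold c_nu. destruct (Rlt_dec 1 1) as [Hc|_]; [lra|].
    rewrite ln_1. replace ((1 - 1) / (1 + 1)) with 0 by field.
    fold Ap. lra.
  - assert (Hnu1 : nu < 1) by lra.
    set (th := (1 + nu) / 2).
    assert (Hth : 0 <= th <= 1) by (unfold th; lra).
    pose proof (amgm (X * G ^ 2 / th) (dl / (1 - th)) th) as AM.
    assert (HX1 : 0 < X * G ^ 2 / th) by (apply Rdiv_lt_0_compat; [nra | unfold th; lra]).
    assert (HY1 : 0 < dl / (1 - th)) by (apply Rdiv_lt_0_compat; [lra | unfold th; lra]).
    specialize (AM HX1 HY1 Hth).
    replace (th * (X * G ^ 2 / th) + (1 - th) * (dl / (1 - th))) with (X * G ^ 2 + dl) in AM
      by (field; unfold th; lra).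
    assert (HR : 0 < 2 * M / (1 + nu) * Rpower (X * G) (1 + nu)).
    { apply Rmult_lt_0_compat. apply Rdiv_lt_0_compat; lra. apply exp_pos. }
    pose proof (ln_le_mono _ _ (exp_pos _) (Rle_trans _ _ _ AM Hmain)) as L1.
    rewrite ln_exp in L1.
    assert (La : ln (X * G ^ 2 / th) = ln X + 2 * ln G - ln th).
    { rewrite ln_div, ln_mult, ln_pow; try nra; try (unfold th; lra). simpl; ring. }
    assert (Lb : ln (dl / (1 - th)) = ln dl - ln (1 - th)).
    { rewrite ln_div; try lra; unfold th; lra. }
    assert (Lc : ln (2 * M / (1 + nu) * Rpower (X * G) (1 + nu)) =
                 ln 2 + ln M - ln (1 + nu) + (1 + nu) * (ln X + ln G)).
    { rewrite ln_mult, ln_div, ln_mult, ln_Rpower, ln_mult; try lra; try nra.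
      - apply Rdiv_lt_0_compat; lra.
      - apply exp_pos. }
    rewrite La, Lb, Lc in L1.
    rewrite lnX, lndl in L1.
    assert (lnth : ln th = ln (1 + nu) - ln 2).
    { unfold th, Rdiv. rewrite ln_mult, ln_Rinv; lra. }
    assert (lnth1 : ln (1 - th) = ln (1 - nu) - ln 2).
    { replace (1 - th) with ((1 - nu) / 2) by (unfold th; field).
      unfold Rdiv. rewrite ln_mult, ln_Rinv; lra. }
    rewrite lnth, lnth1 in L1.
    assert (lnM2 : ln 2 + ln M + - ln (1 + nu) = ln 2 + ln M - ln (1 + nu)) by ring.
    unfold lnC. rewrite ln_c_nu by lra.
    assert (EE : (1 + nu) * ((1 - nu) / (1 + nu) * (ln (1 + nu) - ln (1 - nu)) +
                 (1 - nu) / (1 + nu) * ln eps - 2 / (1 + nu) * ln M) =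
                 (1 - nu) * (ln (1 + nu) - ln (1 - nu)) + (1 - nu) * ln eps - 2 * ln M)
      by (field; lra).
    rewrite EE. fold Ap. unfold th in L1.
    nra.
Qed.

Lemma rec_step (r lK A a : R) : / 2 <= r <= 1 -> 0 < A -> 0 < a ->
  lK + (1 - r) * ln (A + a) <= ln a ->
  exp lK / 2 <= exp (r * ln (A + a)) - exp (r * ln A).
Proof.
  intros Hr HA Ha H.
  set (Ap := A + a) in *.
  assert (HAp : 0 < Ap) by (unfold Ap; lra).
  set (u := exp (r * ln Ap)). set (w := exp (r * ln A)). set (K := exp lK).
  set (sg := exp ((ln A - ln Ap) / 2)).
  assert (Hu : 0 < u) by apply exp_pos. assert (HK : 0 < K) by apply exp_pos.
  assert (Hsg : 0 < sg) by apply exp_pos.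
  assert (F1 : K * Ap <= a * u).
  { pose proof (exp_le_mono _ _ H) as H1. rewrite exp_ln in H1 by lra.
    assert (E : exp (lK + (1 - r) * ln Ap) * u = K * Ap).
    { unfold u, K. rewrite <- exp_plus. replace (lK + (1 - r) * ln Ap + r * ln Ap) with (lK + ln Ap) by ring.
      rewrite exp_plus, exp_ln; auto. }
    rewrite <- E. apply Rmult_le_compat_r; lra. }
  assert (F2 : w = u * exp (r * (ln A - ln Ap))).
  { unfold u, w. rewrite <- exp_plus. f_equal. ring. }
  assert (Hle : ln A <= ln Ap) by (apply ln_le_mono; unfold Ap; lra).
  assert (F3 : exp (r * (ln A - ln Ap)) <= sg).
  { apply exp_le_mono. nra. }
  assert (F4 : sg * sg * Ap = A).
  { unfold sg. rewrite <- exp_plus. replace ((ln A - ln Ap) / 2 + (ln A - ln Ap) / 2) with (ln A + - ln Ap) by field.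
    rewrite exp_plus, exp_Ropp, !exp_ln; auto. field; lra. }
  assert (F5 : w <= u * sg) by (rewrite F2; apply Rmult_le_compat_l; lra).
  assert (F6 : 2 * sg <= 1 + sg * sg) by (pose proof (pow2_ge_0 (sg - 1)); nra).
  assert (F7a : w * Ap <= u * sg * Ap) by (apply Rmult_le_compat_r; lra).
  assert (F7b : u * Ap * (2 * sg) <= u * Ap * (1 + sg * sg)).
  { apply Rmult_le_compat_l; [|lra]. apply Rmult_le_pos; lra. }
  assert (F7 : 2 * w * Ap <= u * (Ap + A)).
  { rewrite <- F4. replace (u * (Ap + sg * sg * Ap)) with (u * Ap * (1 + sg * sg)) by ring. lra. }
  assert (Ap = A + a) by reflexivity.
  assert (K * Ap <= 2 * (u - w) * Ap) by nra.
  assert (K <= 2 * (u - w)) by (apply Rmult_le_reg_r with Ap; lra).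
  lra.
Qed.

Lemma rec_seq (r lK : R) (A a : nat -> R) : / 2 <= r <= 1 ->
  A 0%nat = 0 -> (forall k, A (S k) = A k + a (S k)) -> (forall k, 0 < a (S k)) ->
  (forall k, lK + (1 - r) * ln (A (S k)) <= ln (a (S k))) ->
  forall k, INR (S k) * exp lK / 2 <= exp (r * ln (A (S k))).
Proof.
  intros Hr HA0 HAS Ha Hl k.
  induction k as [|k IH].
  - specialize (Hl 0%nat). rewrite HAS, HA0, Rplus_0_l in *.
    assert (lK <= r * ln (a 1%nat)) by lra.
    pose proof (exp_le_mono _ _ H). pose proof (exp_pos lK). simpl. lra.
  - assert (HApos : 0 < A (S k)).
    { clear IH. induction k as [|k IHk].
      - rewrite HAS, HA0. specialize (Ha 0%nat). lra.
      - rewrite HAS. specialize (Ha (S k)). lra. }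
    pose proof (rec_step r lK (A (S k)) (a (S (S k))) Hr HApos (Ha (S k))) as R1.
    rewrite <- HAS in R1. specialize (R1 (Hl (S k))).
    rewrite S_INR. lra.
Qed.

Lemma c_nu_pos nu : 0 < c_nu nu.
Proof. unfold c_nu. destruct (Rlt_dec nu 1). - apply exp_pos. - lra. Qed.

Lemma final_bound (nu M eps : R) (A a : nat -> R) : 0 <= nu <= 1 -> 0 < M -> 0 < eps ->
  A 0%nat = 0 -> (forall k, A (S k) = A k + a (S k)) -> (forall k, 0 < a (S k)) ->
  (forall k, (1 + nu) * lnC nu eps M + 2 * nu * ln (A (S k)) <= (1 + 3 * nu) * ln (a (S k))) ->
  forall k, c_nu nu * hpow (INR k) ((1 + 3 * nu) / (1 + nu)) * Rpower eps ((1 - nu) / (1 + nu))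
         / (Rpower 2 ((1 + 3 * nu) / (1 + nu)) * Rpower M (2 / (1 + nu))) <= A k.
Proof.
  intros Hnu HM He HA0 HAS Ha Hl k.
  set (q := (1 + 3 * nu) / (1 + nu)).
  assert (Hq : 1 <= q <= 2).
  { unfold q; split; apply Rmult_le_reg_r with (1 + nu); try lra;
    unfold Rdiv; rewrite Rmult_assoc, Rinv_l; lra. }
  destruct k as [|k].
  - rewrite HA0. unfold hpow. simpl INR.
    destruct (Req_EM_T 0 0) as [_|C]; [|lra].
    destruct (Req_EM_T q 0) as [Cq|_]; [lra|].
    unfold q. destruct (Req_EM_T ((1 + 3 * nu) / (1 + nu)) 0) as [Cq|_]; [fold q in Cq; lra|].
    rewrite Rmult_0_r, Rmult_0_l. unfold Rdiv. rewrite Rmult_0_l. lra.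
  - set (r := (1 + nu) / (1 + 3 * nu)).
    set (lK := (1 + nu) * lnC nu eps M / (1 + 3 * nu)).
    assert (Hr : / 2 <= r <= 1).
    { unfold r; split; apply Rmult_le_reg_r with (1 + 3 * nu); try lra;
      unfold Rdiv; rewrite Rmult_assoc, Rinv_l; lra. }
    assert (Hl' : forall k, lK + (1 - r) * ln (A (S k)) <= ln (a (S k))).
    { intro j. specialize (Hl j). apply Rmult_le_reg_l with (1 + 3 * nu); [lra|].
      replace ((1 + 3 * nu) * (lK + (1 - r) * ln (A (S j))))
        with ((1 + nu) * lnC nu eps M + 2 * nu * ln (A (S j))) by (unfold lK, r; field; lra).
      lra. }
    pose proof (rec_seq r lK A a Hr HA0 HAS Ha Hl' k) as B.
    assert (HAk : 0 < A (S k)).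
    { clear B. induction k as [|k IHk].
      - rewrite HAS, HA0. specialize (Ha 0%nat). lra.
      - rewrite HAS. specialize (Ha (S k)). lra. }
    assert (Hk : 0 < INR (S k)) by (apply lt_0_INR; lia).
    assert (B2 : ln (INR (S k)) + lK - ln 2 <= r * ln (A (S k))).
    { assert (Hpos : 0 < INR (S k) * exp lK / 2) by (pose proof (exp_pos lK); nra).
      pose proof (ln_le_mono _ _ Hpos B) as B1. rewrite ln_exp in B1.
      rewrite ln_div, ln_mult, ln_exp in B1; try lra; try apply exp_pos; try nra. }
    assert (B3 : q * (ln (INR (S k)) + lK - ln 2) <= ln (A (S k))).
    { replace (ln (A (S k))) with (q * (r * ln (A (S k)))) by (unfold q, r; field; lra).
      apply Rmult_le_compat_l; lra. }
    assert (Et : c_nu nu * hpow (INR (S k)) q * Rpower eps ((1 - nu) / (1 + nu))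
         / (Rpower 2 q * Rpower M (2 / (1 + nu))) = exp (q * (ln (INR (S k)) + lK - ln 2))).
    { unfold hpow. destruct (Req_EM_T (INR (S k)) 0) as [C|_]; [lra|].
      rewrite <- (exp_ln (c_nu nu)) by apply c_nu_pos.
      unfold Rpower. rewrite <- !exp_plus. unfold Rdiv. rewrite <- exp_Ropp, <- exp_plus.
      f_equal. unfold lK, lnC, q. field. lra. }
    fold q. rewrite Et. rewrite <- (exp_ln (A (S k))) by auto. apply exp_le_mono. exact B3.
Qed.

Lemma descent_core (g p : R -> R) (G M nu : R) : 0 <= nu -> 0 < M ->
  (forall t, derivable_pt_lim g t (- p t)) ->
  (forall t, 0 < t -> G - M * Rpower t nu <= p t) ->
  forall T, 0 < T -> g T <= g 0 - T * G + M / (1 + nu) * Rpower T (1 + nu).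
Proof.
  intros Hnu HM Hder Hp T HT.
  set (phi := fun t => (g t + G * t) - M / (1 + nu) * Rpower t (1 + nu)).
  assert (C1 : forall a0, 0 < a0 < T -> phi T <= phi a0).
  { intros a0 Ha0.
    destruct (MVT_cor2 phi (fun c => (- p c + G * 1) - M / (1 + nu) * ((1 + nu) * Rpower c (1 + nu - 1))) a0 T)
      as [c [Hc1 Hc2]]; [lra | |].
    - intros c Hc. unfold phi.
      apply (derivable_pt_lim_minus (fun t => g t + G * t) (fun t => M / (1 + nu) * Rpower t (1 + nu))).
      + apply (derivable_pt_lim_plus g (fun t => G * t)); [apply Hder|].
        apply (derivable_pt_lim_scal (fun t => t) G c 1). apply derivable_pt_lim_id.
      + apply (derivable_pt_lim_scal (fun t => Rpower t (1 + nu)) (M / (1 + nu)) c).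
        apply derivable_pt_lim_power. lra.
    - replace (1 + nu - 1) with nu in Hc1 by ring.
      pose proof (Hp c ltac:(lra)).
      assert (E : M / (1 + nu) * ((1 + nu) * Rpower c nu) = M * Rpower c nu) by (field; lra).
      rewrite E in Hc1. nra. }
  assert (C2 : exists d, 0 < d /\ forall hh, 0 < hh < d -> g hh <= g 0 + hh * (1 + Rabs (p 0))).
  { destruct (Hder 0 1 ltac:(lra)) as [d Hd]. exists d. split; [apply cond_pos|].
    intros hh Hh. specialize (Hd hh ltac:(lra)).
    rewrite Rabs_pos_eq in Hd by lra. specialize (Hd ltac:(lra)).
    rewrite Rplus_0_l in Hd. apply Rabs_def2 in Hd. destruct Hd as [Hd _].
    pose proof (Rle_abs (- p 0)). rewrite Rabs_Ropp in H.
    assert ((g hh - g 0) / hh < 1 + Rabs (p 0)) by lra.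
    apply Rmult_lt_compat_r with (r := hh) in H0; [|lra].
    unfold Rdiv in H0. rewrite Rmult_assoc, Rinv_l, Rmult_1_r in H0 by lra. lra. }
  destruct C2 as [d [Hd Hg]].
  cut (phi T <= g 0).
  { unfold phi. lra. }
  apply Rnot_lt_le. intro Hc.
  set (K := 1 + Rabs (p 0) + Rabs G).
  assert (HK : 0 < K) by (unfold K; pose proof (Rabs_pos (p 0)); pose proof (Rabs_pos G); lra).
  set (e0 := phi T - g 0).
  set (a0 := Rmin (Rmin (T / 2) (d / 2)) (e0 / (2 * K))).
  assert (Ha0pos : 0 < a0).
  { unfold a0. apply Rmin_pos; [apply Rmin_pos|]; try lra. apply Rdiv_lt_0_compat; unfold e0; lra. }
  assert (Ha0T : a0 <= T / 2) by (unfold a0; eapply Rle_trans; [apply Rmin_l|apply Rmin_l]).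
  assert (Ha0d : a0 <= d / 2) by (unfold a0; eapply Rle_trans; [apply Rmin_l|apply Rmin_r]).
  assert (Ha0e : a0 <= e0 / (2 * K)) by (unfold a0; apply Rmin_r).
  pose proof (C1 a0 ltac:(lra)) as P1.
  pose proof (Hg a0 ltac:(lra)) as P2.
  assert (P3 : 0 <= Rpower a0 (1 + nu)) by (left; apply exp_pos).
  assert (P4 : 0 <= M / (1 + nu)) by (left; apply Rdiv_lt_0_compat; lra).
  assert (P5 : G * a0 <= Rabs G * a0) by (apply Rmult_le_compat_r; [lra | apply Rle_abs]).
  assert (P6 : a0 * K <= e0 / 2).
  { apply Rmult_le_reg_r with (/ K). apply Rinv_0_lt_compat; lra.
    rewrite Rmult_assoc, Rinv_r, Rmult_1_r by lra.
    replace (e0 / 2 * / K) with (e0 / (2 * K)) by (field; lra). lra. }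
  assert (P7 : 0 <= M / (1 + nu) * Rpower a0 (1 + nu)) by (apply Rmult_le_pos; lra).
  unfold K in P6. unfold e0 in *. unfold phi in *. lra.
Qed.

Lemma hpow_le u c nu : 0 <= nu -> 0 <= u <= c -> 0 < c -> hpow u nu <= Rpower c nu.
Proof.
  intros Hnu Hu Hc. unfold hpow.
  destruct (Req_EM_T u 0) as [H0|H0].
  - destruct (Req_EM_T nu 0) as [H1|H1].
    + subst. rewrite Rpower_O; lra.
    + left; apply exp_pos.
  - apply Rle_Rpower_l; lra.
Qed.

Section Descent.
Variables (n : nat) (N : Vec n -> R) (f : Vec n -> R) (D : Vec n -> Vec n).
Hypothesis HN : is_norm N.
Hypothesis Hdual : DualOK N.
Variables (nu M : R) (y0 s : Vec n) (G : R).
Hypothesis Hnu : 0 <= nu <= 1.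
Hypothesis HM : 0 < M.
Hypothesis Hhol : holder N D nu M.
Hypothesis Hs : N s <= 1.
Hypothesis HG : pair (D y0) s = G.

Definition zz (t : R) : Vec n := vsub y0 (vscal t s).
Definition pp (t : R) : R := pair (D (zz t)) s.
Definition gg (t : R) : R := f (zz t).

Lemma zz_diff t1 t2 : vsub (zz t1) (zz t2) = vscal (t2 - t1) s.
Proof. apply functional_extensionality; intro i; unfold zz, vsub, vscal; ring. Qed.

Lemma N_zz_diff t1 t2 : N (vsub (zz t1) (zz t2)) <= Rabs (t2 - t1).
Proof.
  rewrite zz_diff, N_scal by auto. pose proof (Rabs_pos (t2 - t1)).
  pose proof (N_ge0 n N s HN). nra.
Qed.

Lemma pair_hol z1 z2 : pair (vsub (D z1) (D z2)) s <= M * hpow (N (vsub z1 z2)) nu.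
Proof.
  pose proof (dual_le n N (vsub (D z1) (D z2)) s HN Hdual).
  pose proof (dnorm_ge0 n N (vsub (D z1) (D z2)) HN Hdual).
  pose proof (Hhol z1 z2). pose proof (N_ge0 n N s HN). nra.
Qed.

Lemma pp_lower t : 0 < t -> G - M * Rpower t nu <= pp t.
Proof.
  intros Ht.
  pose proof (pair_hol y0 (zz t)) as H1. rewrite pair_sub_l, HG in H1.
  assert (E : y0 = zz 0) by (apply functional_extensionality; intro i; unfold zz, vsub, vscal; ring).
  assert (Hle : N (vsub y0 (zz t)) <= Rabs (t - 0)) by (rewrite E at 1; apply N_zz_diff).
  rewrite Rminus_0_r, Rabs_pos_eq in Hle by lra.
  pose proof (hpow_le (N (vsub y0 (zz t))) t nu ltac:(lra) (conj (N_ge0 n N _ HN) Hle) Ht).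
  unfold pp. nra.
Qed.

Lemma pp_diff t hh : hh <> 0 -> Rabs (pp t - pp (t + hh)) <= M * Rpower (Rabs hh) nu.
Proof.
  intros Hh.
  assert (Hpos : 0 < Rabs hh) by (apply Rabs_pos_lt; auto).
  pose proof (pair_hol (zz t) (zz (t + hh))) as H1.
  pose proof (pair_hol (zz (t + hh)) (zz t)) as H2.
  rewrite pair_sub_l in H1, H2. fold (pp t) (pp (t + hh)) in H1, H2.
  pose proof (N_zz_diff t (t + hh)) as N1. pose proof (N_zz_diff (t + hh) t) as N2.
  replace (t + hh - t) with hh in N1 by ring.
  replace (t - (t + hh)) with (- hh) in N2 by ring. rewrite Rabs_Ropp in N2.
  pose proof (hpow_le _ _ nu ltac:(lra) (conj (N_ge0 n N _ HN) N1) Hpos).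
  pose proof (hpow_le _ _ nu ltac:(lra) (conj (N_ge0 n N _ HN) N2) Hpos).
  apply Rabs_le. split; nra.
Qed.

Lemma gg_deriv_C1 : C1_grad N f D -> forall t, derivable_pt_lim gg t (- pp t).
Proof.
  intros [Hgr _] t eps Heps.
  destruct (Hgr (zz t) (eps / 2) ltac:(lra)) as [d0 [Hd0 Hd]].
  exists (mkposreal d0 Hd0). intros hh Hh0 Hhd. simpl in Hhd.
  assert (Hpos : 0 < Rabs hh) by (apply Rabs_pos_lt; auto).
  assert (Ev : vadd (zz t) (vscal (- hh) s) = zz (t + hh)).
  { apply functional_extensionality; intro i; unfold zz, vadd, vsub, vscal; ring. }
  assert (HNh : N (vscal (- hh) s) <= Rabs hh).
  { rewrite N_scal, Rabs_Ropp by auto. pose proof (N_ge0 n N s HN). nra. }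
  specialize (Hd (vscal (- hh) s) ltac:(lra)).
  rewrite Ev, pair_scal_r in Hd. fold (gg (t + hh)) (gg t) (pp t) in Hd.
  replace ((gg (t + hh) - gg t) / hh - - pp t) with ((gg (t + hh) - gg t - - hh * pp t) * / hh)
    by (field; auto).
  rewrite Rabs_mult, Rabs_inv.
  apply Rmult_lt_reg_r with (Rabs hh); auto.
  rewrite Rmult_assoc, Rinv_l, Rmult_1_r by lra.
  pose proof (N_ge0 n N (vscal (- hh) s) HN). nra.
Qed.

Lemma gg_deriv_cvx : 0 < nu -> (forall z, is_subgrad f z (D z)) ->
  forall t, derivable_pt_lim gg t (- pp t).
Proof.
  intros Hnu0 Hsub t eps Heps.
  set (d0 := Rpower (eps / (2 * M)) (/ nu)).
  assert (Hd0 : 0 < d0) by apply exp_pos.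
  exists (mkposreal d0 Hd0). intros hh Hh0 Hhd. simpl in Hhd.
  assert (Hpos : 0 < Rabs hh) by (apply Rabs_pos_lt; auto).
  pose proof (Hsub (zz t) (zz (t + hh))) as S1.
  pose proof (Hsub (zz (t + hh)) (zz t)) as S2.
  rewrite zz_diff, pair_scal_r in S1, S2.
  replace (t - (t + hh)) with (- hh) in S1 by ring.
  replace (t + hh - t) with hh in S2 by ring.
  fold (gg t) (gg (t + hh)) (pp t) (pp (t + hh)) in S1, S2.
  pose proof (pp_diff t hh Hh0) as PD.
  assert (HR : Rpower (Rabs hh) nu < eps / (2 * M)).
  { replace (eps / (2 * M)) with (Rpower d0 nu).
    - apply Rlt_Rpower_l; lra.
    - unfold d0. rewrite Rpower_mult. replace (/ nu * nu) with 1 by (field; lra).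
      rewrite Rpower_1; auto. apply Rdiv_lt_0_compat; lra. }
  set (X := gg (t + hh) - gg t + hh * pp t).
  assert (X0 : 0 <= X) by (unfold X; lra).
  assert (X1 : X <= hh * (pp t - pp (t + hh))) by (unfold X; lra).
  assert (X2 : hh * (pp t - pp (t + hh)) <= Rabs hh * (M * Rpower (Rabs hh) nu)).
  { eapply Rle_trans; [apply Rle_abs|]. rewrite Rabs_mult. apply Rmult_le_compat_l; auto. apply Rabs_pos. }
  replace ((gg (t + hh) - gg t) / hh - - pp t) with (X * / hh) by (unfold X; field; auto).
  rewrite Rabs_mult, Rabs_inv, Rabs_pos_eq by auto.
  apply Rmult_lt_reg_r with (Rabs hh); auto.
  rewrite Rmult_assoc, Rinv_l, Rmult_1_r by lra.
  assert (M * Rpower (Rabs hh) nu < eps / 2).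
  { replace (eps / 2) with (M * (eps / (2 * M))) by (field; lra). apply Rmult_lt_compat_l; auto. }
  nra.
Qed.


Lemma descent_all : ((convex f /\ forall z, is_subgrad f z (D z)) \/ C1_grad N f D) ->
  forall T, 0 < T -> gg T <= gg 0 - T * G + M / (1 + nu) * Rpower T (1 + nu).
Proof.
  intros Hcase T HT.
  destruct Hcase as [[_ Hsub] | HC1].
  - destruct (Req_dec nu 0) as [H0|H0].
    + pose proof (Hsub (zz T) (zz 0)) as S1. rewrite zz_diff, pair_scal_r in S1.
      fold (gg T) (gg 0) (pp T) in S1.
      pose proof (pp_lower T HT) as P. rewrite H0 in P |- *. rewrite Rpower_O in P by lra.
      rewrite Rplus_0_r, Rpower_1 by lra. replace (M / 1) with M by field.
      replace (T - 0) with T in S1 by ring. nra.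
    + apply (descent_core gg pp G M nu); try lra.
      * apply gg_deriv_cvx; auto; lra.
      * apply pp_lower.
  - apply (descent_core gg pp G M nu); try lra.
    + apply gg_deriv_C1; auto.
    + apply pp_lower.
Qed.

End Descent.

Section Run.
Variables (n : nat) (N : Vec n -> R) (f : Vec n -> R) (D : Vec n -> Vec n)
  (sharp : Vec n -> Vec n) (d : Vec n -> R) (Dd : Vec n -> Vec n) (eps : R)
  (x v y : nat -> Vec n) (beta h a A : nat -> R) (psi : nat -> Vec n -> R).
Hypothesis HN : is_norm N.
Hypothesis Hsh : is_sharp N sharp.
Hypothesis Hprox : prox_fun N d Dd.
Hypothesis Heps : 0 < eps.
Hypothesis Hrun : UAGMsDR_run N f D sharp d Dd eps x v y beta h a A psi.
Hypothesis Hnz : forall k, D (y k) <> vzero.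
Hypothesis Hdual : DualOK N.

Lemma fy_le_fx k : f (y k) <= f (x k).
Proof.
  destruct Hrun as [_ [_ [_ Hstep]]].
  destruct (Hstep k) as [[Hb Hbmin] [Hy _]].
  rewrite Hy. 
  replace (x k) with (vadd (v k) (vscal 1 (vsub (x k) (v k)))) at 2.
  - apply Hbmin; lra.
  - apply functional_extensionality; intro i; unfold vadd, vscal, vsub; ring.
Qed.

Lemma fx1_le_fy k : f (x (S k)) <= f (y k).
Proof.
  destruct Hrun as [_ [_ [_ Hstep]]].
  destruct (Hstep k) as [_ [_ [_ [[Hh Hhmin] [Hx _]]]]].
  rewrite Hx.
  pose proof (Hhmin 0 (Rle_refl 0)) as H0.
  replace (vsub (y k) (vscal 0 (sharp (D (y k))))) with (y k) in H0.
  - exact H0.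
  - apply functional_extensionality; intro i; unfold vscal, vsub; ring.
Qed.

Lemma G_pos k : 0 < dnorm N (D (y k)).
Proof. apply dnorm_pos; auto. Qed.

Lemma a_pos_of k : 0 <= A k -> 0 < a (S k).
Proof.
  intros HA.
  destruct Hrun as [_ [_ [_ Hstep]]].
  destruct (Hstep k) as [_ [_ [_ [_ [_ [Haeq [Hamax _]]]]]]].
  set (G := dnorm N (D (y k))) in *.
  assert (HG : 0 < G) by apply G_pos.
  pose proof (fx1_le_fy k) as Hf.
  set (Dl := f (y k) - f (x (S k))).
  assert (HDl : 0 <= Dl) by (unfold Dl; lra).
  set (B := eps + 2 * Dl).
  set (sq := sqrt (B ^ 2 + 8 * Dl * A k * G ^ 2)).
  assert (Hsq2 : sq * sq = B ^ 2 + 8 * Dl * A k * G ^ 2).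
  { unfold sq. apply sqrt_sqrt. assert (0 <= Dl * A k * G ^ 2) by (apply Rmult_le_pos; [apply Rmult_le_pos|]; nra). nra. }
  assert (Hsq0 : 0 <= sq) by apply sqrt_pos.
  set (r := (B + sq) / (2 * G ^ 2)).
  assert (HG2 : 0 < G ^ 2) by nra.
  assert (Hr : 0 < r) by (unfold r; apply Rdiv_lt_0_compat; unfold B; lra).
  assert (Hq : G ^ 2 * r ^ 2 - B * r - 2 * Dl * A k = 0).
  { unfold r. field_simplify; [|lra]. 
    replace (sq ^ 2) with (sq * sq) by ring. rewrite Hsq2. field. lra. }
  assert (Eq : r ^ 2 * G ^ 2 - eps * r = 2 * Dl * (A k + r)) by (unfold B in Hq; nra).
  assert (Hra : a_eq (f (y k)) (f (x (S k))) G eps (A k) r).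
  { split; [lra|].
    replace (f (y k) - r ^ 2 / (2 * (A k + r)) * G ^ 2 + eps * r / (2 * (A k + r)))
      with (f (y k) - (r ^ 2 * G ^ 2 - eps * r) / (2 * (A k + r))) by (field; lra).
    rewrite Eq. unfold Dl. field. lra. }
  pose proof (Hamax r Hra). lra.
Qed.

Lemma A_nonneg k : 0 <= A k.
Proof.
  induction k as [|k IH].
  - destruct Hrun as [HA0 _]. lra.
  - pose proof (a_pos_of k IH).
    destruct Hrun as [_ [_ [_ Hstep]]].
    destruct (Hstep k) as [_ [_ [_ [_ [_ [_ [_ [HA _]]]]]]]].
    lra.
Qed.

Lemma a_pos k : 0 < a (S k).
Proof. apply a_pos_of, A_nonneg. Qed.

Lemma psi_form k : exists al be, forall z, psi k z = d z + pair al z + be.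
Proof.
  induction k as [|k [al [be IH]]].
  - destruct Hrun as [_ [_ [Hpsi0 _]]].
    exists (vscal (Ropp 1) (Dd (x 0%nat))), (- d (x 0%nat) + pair (Dd (x 0%nat)) (x 0%nat)).
    intro z. rewrite Hpsi0. unfold bregman.
    rewrite pair_scal_l, pair_sub_r. ring.
  - destruct Hrun as [_ [_ [_ Hstep]]].
    destruct (Hstep k) as [_ [_ [_ [_ [_ [_ [_ [_ [Hpsi _]]]]]]]]].
    exists (vadd al (vscal (a (S k)) (D (y k)))),
      (be + a (S k) * (f (y k) - pair (D (y k)) (y k))).
    intro z. rewrite Hpsi. rewrite IH. rewrite pair_add_l, pair_scal_l, pair_sub_r. ring.
Qed.

Lemma v_min k : forall z, psi k (v k) <= psi k z.
Proof.
  destruct k as [|k].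
  - destruct Hrun as [_ [Hv0 [Hpsi0 _]]].
    intro z. rewrite Hpsi0, Hv0. unfold bregman.
    rewrite vsub_self, pair_zero_r.
    destruct Hprox as [_ [_ [Hsc _]]].
    pose proof (Hsc (x 0%nat) z). pose proof (N_ge0 n N (vsub z (x 0%nat)) HN). nra.
  - destruct Hrun as [_ [_ [_ Hstep]]].
    destruct (Hstep k) as [_ [_ [_ [_ [_ [_ [_ [_ [_ Hvm]]]]]]]]].
    exact Hvm.
Qed.

Lemma part1 k : A k * f (x k) <= psi k (v k) + A k * eps / 2.
Proof.
  induction k as [|k IH].
  - destruct Hrun as [HA0 _]. rewrite HA0.
    pose proof (v_min 0%nat).
    destruct Hrun as [_ [Hv0 [Hpsi0 _]]].
    rewrite Hpsi0, Hv0. unfold bregman. rewrite vsub_self, pair_zero_r. lra.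
  - pose proof (A_nonneg k) as HA. pose proof (a_pos k) as Ha.
    pose proof (fy_le_fx k) as Hfy.
    pose proof (G_pos k) as HG.
    destruct (psi_form k) as [al [be Hform]].
    pose proof (v_min k) as Hvm.
    destruct Hrun as [_ [_ [_ Hstep]]].
    destruct (Hstep k) as [_ [_ [Hgv [_ [_ [[HAa Haeq] [_ [HA1 [Hpsi _]]]]]]]]].
    set (G := dnorm N (D (y k))) in *.
    set (g := D (y k)) in *.
    assert (Hsc : psi k (v k) + / 2 * N (vsub (v (S k)) (v k)) ^ 2 <= psi k (v (S k))).
    { rewrite !Hform. apply sc_min with Dd; auto.
      intro w. rewrite <- !Hform. apply Hvm. }
    set (nn := N (vsub (v (S k)) (v k))) in *.
    assert (Hdl : pair g (vsub (v k) (v (S k))) <= G * nn).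
    { unfold nn. rewrite (N_sub_sym n N (v (S k)) (v k) HN). apply dual_le; auto. }
    rewrite pair_sub_r in Hdl. apply Rge_le in Hgv. rewrite pair_sub_r in Hgv.
    rewrite HA1, Hpsi. rewrite pair_sub_r.
    assert (Eqx : (A k + a (S k)) * f (x (S k)) =
       (A k + a (S k)) * f (y k) - a (S k) ^ 2 * G ^ 2 / 2 + eps * a (S k) / 2).
    { rewrite <- Haeq. field. auto. }
    rewrite Eqx.
    set (P1 := pair g (v (S k))) in *. set (P2 := pair g (v k)) in *. set (P3 := pair g (y k)) in *.
    assert (T1 : 0 <= a (S k) * (P2 - P3)) by (apply Rmult_le_pos; lra).
    assert (T2 : a (S k) * (P2 - P1) <= a (S k) * (G * nn)) by (apply Rmult_le_compat_l; lra).
    assert (T3 : A k * f (y k) <= A k * f (x k)) by (apply Rmult_le_compat_l; lra).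
    assert (T4 : 0 <= (nn - a (S k) * G) ^ 2) by apply pow2_ge_0.
    nra.
Qed.

Lemma step_desc k nu M : 0 <= nu <= 1 -> 0 < M -> holder N D nu M ->
  ((convex f /\ forall z, is_subgrad f z (D z)) \/ C1_grad N f D) ->
  forall t, 0 < t -> t * dnorm N (D (y k)) - M / (1 + nu) * Rpower t (1 + nu) <= f (y k) - f (x (S k)).
Proof.
  intros Hnu HM Hhol Hcase t Ht.
  destruct (Hsh (D (y k))) as [Hs HG].
  pose proof (descent_all n N f D HN Hdual nu M (y k) (sharp (D (y k))) (dnorm N (D (y k)))
     Hnu HM Hhol Hs HG Hcase t Ht) as Hd.
  unfold gg in Hd.
  assert (E0 : zz n (y k) (sharp (D (y k))) 0 = y k).
  { apply functional_extensionality; intro i; unfold zz, vsub, vscal; ring. }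
  rewrite E0 in Hd.
  destruct Hrun as [_ [_ [_ Hstep]]].
  destruct (Hstep k) as [_ [_ [_ [[_ Hhmin] [Hx _]]]]].
  pose proof (Hhmin t ltac:(lra)) as Hm. rewrite <- Hx in Hm.
  unfold zz in Hd. lra.
Qed.

Lemma part2 nu M : 0 <= nu <= 1 -> 0 < M -> holder N D nu M ->
  ((convex f /\ forall z, is_subgrad f z (D z)) \/ C1_grad N f D) ->
  forall k, c_nu nu * hpow (INR k) ((1 + 3 * nu) / (1 + nu)) * Rpower eps ((1 - nu) / (1 + nu))
         / (Rpower 2 ((1 + 3 * nu) / (1 + nu)) * Rpower M (2 / (1 + nu))) <= A k.
Proof.
  intros Hnu HM Hhol Hcase.
  assert (HA0 : A 0%nat = 0) by (destruct Hrun as [H _]; exact H).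
  assert (HAS : forall k, A (S k) = A k + a (S k)).
  { intro k. destruct Hrun as [_ [_ [_ Hstep]]].
    destruct (Hstep k) as [_ [_ [_ [_ [_ [_ [_ [HA _]]]]]]]]. exact HA. }
  apply (final_bound nu M eps A a); auto.
  - apply a_pos.
  - intro k. rewrite HAS.
    destruct Hrun as [_ [_ [_ Hstep]]].
    destruct (Hstep k) as [_ [_ [_ [_ [_ [[HAa Haeq] _]]]]]].
    apply (step_log nu M eps (dnorm N (D (y k))) (A k) (a (S k)) (f (y k) - f (x (S k)))); auto.
    + apply G_pos.
    + apply A_nonneg.
    + apply a_pos.
    + rewrite <- Haeq. field. auto.
    + apply step_desc; auto.
Qed.

End Run.
Module AM.
From HB Require Import structures.
From mathcomp Require Import all_boot all_order all_algebra.
From mathcomp Require Import all_classical all_reals all_analysis.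
From mathcomp Require Import lra Rstruct.
Import Order.TTheory GRing.Theory Num.Theory.
Import numFieldNormedType.Exports. Import Num.Def.
Local Open Scope ring_scope.
Local Open Scope classical_set_scope.
Section Attain.
Variable R : realType.
Variable n : nat.
Local Notation V := 'rV[R]_n.+1.

Lemma lip_cont (f : V -> R) (K : R) : 0 < K ->
  (forall u v, `|f u - f v| <= K * `|u - v|) -> continuous f.
Proof.
move=> K0 fl x; apply/(@cvgrPdist_lt _ R^o _ _ (nbhs_filter x)) => e e0.
apply/(@nbhs_normP R V x (fun t => `|f x - f t| < e)); exists (e / K); first by rewrite /= divr_gt0.
move=> y /= hy.
apply: le_lt_trans (fl _ _) _.
by rewrite mulrC -ltr_pdivlMr.
Qed.

Lemma coord_le (u : V) j : `|u 0 j| <= `|u|.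
Proof.
have /mapP[k Hk ->] : `|u 0 j| \in [seq `|u x.1 x.2| | x : 'I_1 * 'I_n.+1].
  by apply/mapP; exists (ord0, j) => //=; rewrite mem_enum.
by rewrite [leRHS]/normr /= mx_normrE; apply/bigmax_geP; right => /=; exists k.
Qed.

Variables (Nt L : V -> R).
Hypothesis NtD : forall u v, Nt (u + v) <= Nt u + Nt v.
Hypothesis NtZ : forall (c : R) u, Nt (c *: u) = `|c| * Nt u.
Hypothesis Ntpos : forall u, u != 0 -> 0 < Nt u.
Hypothesis LD : forall u v, L (u + v) = L u + L v.
Hypothesis LZ : forall (c : R) u, L (c *: u) = c * L u.

Lemma Nt0 : Nt 0 = 0.
Proof. by rewrite -(scale0r (0 : V)) NtZ normr0 mul0r. Qed.
Lemma L0 : L 0 = 0.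
Proof. by rewrite -(scale0r (0 : V)) LZ mul0r. Qed.
Lemma NtN u : Nt (- u) = Nt u.
Proof. by rewrite -scaleN1r NtZ normrN normr1 mul1r. Qed.
Lemma Nt_ge0 u : 0 <= Nt u.
Proof. by have [->|/Ntpos/ltW//] := eqVneq u 0; rewrite Nt0. Qed.

Lemma Nt_sum (I : Type) (r : seq I) (F : I -> V) :
  Nt (\sum_(i <- r) F i) <= \sum_(i <- r) Nt (F i).
Proof.
elim: r => [|a r IH]; first by rewrite !big_nil Nt0.
rewrite !big_cons; apply: le_trans (NtD _ _) _; by rewrite lerD2l.
Qed.

Lemma L_sum (I : Type) (r : seq I) (F : I -> V) :
  L (\sum_(i <- r) F i) = \sum_(i <- r) L (F i).
Proof.
elim: r => [|a r IH]; first by rewrite !big_nil L0.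
by rewrite !big_cons LD IH.
Qed.

Definition K1 := \sum_(j < n.+1) Nt 'e_j.
Definition K2 := \sum_(j < n.+1) `|L 'e_j|.

Lemma Nt_le u : Nt u <= K1 * `|u|.
Proof.
rewrite {1}(row_sum_delta u) /K1 mulr_suml.
apply: le_trans (Nt_sum _ _ _) _; apply: ler_sum => j _.
by rewrite NtZ mulrC ler_wpM2l ?Nt_ge0 ?coord_le.
Qed.

Lemma L_le u : `|L u| <= K2 * `|u|.
Proof.
rewrite {1}(row_sum_delta u) L_sum /K2 mulr_suml.
apply: le_trans (ler_norm_sum _ _ _) _.
apply: ler_sum => j _.
by rewrite LZ normrM mulrC ler_wpM2l ?coord_le.
Qed.

Lemma K1_ge0 : 0 <= K1.
Proof. by apply: sumr_ge0 => j _; apply: Nt_ge0. Qed.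
Lemma K2_ge0 : 0 <= K2.
Proof. by apply: sumr_ge0 => j _. Qed.

Lemma LB u v : L u - L v = L (u - v).
Proof. have := LD (u - v) v; rewrite subrK => ->; by rewrite addrK. Qed.

Lemma L_cont : continuous L.
Proof.
apply: (@lip_cont L (K2 + 1)); first by rewrite ltr_wpDl ?K2_ge0.
move=> u v; rewrite LB; apply: le_trans (L_le _) _.
by rewrite ler_wpM2r ?normr_ge0 // lerDl.
Qed.

Lemma Nt_cont : continuous Nt.
Proof.
apply: (@lip_cont Nt (K1 + 1)); first by rewrite ltr_wpDl ?K1_ge0.
move=> u v; apply: le_trans (_ : _ <= Nt (u - v)) _; last first.
  apply: le_trans (Nt_le _) _.
  by rewrite ler_wpM2r ?normr_ge0 // lerDl.
have h1 := NtD u (v - u); rewrite [u + _]addrC subrK -(NtN (v - u)) opprB in h1.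
have h2 := NtD (u - v) v; rewrite subrK in h2.
rewrite ler_distl; apply/andP; split.
  by rewrite lerBlDr; apply: (le_trans h1); rewrite addrC.
by apply: (le_trans h2); rewrite addrC.
Qed.

Definition Sph : set V := [set u | `|u| = 1].

Lemma Sph_compact : compact Sph.
Proof.
have cl : closed Sph.
  apply: (@preimage_closed _ _ (fun u : V => `|u|) [set x : R | x = 1]).
    by move=> u _; apply: norm_continuous.
  exact: closed_eq.
apply: bounded_closed_compact => //.
exists 1; split => // M M1 u Su; rewrite /= Su ltW //.
Qed.

Lemma Sph_neq0 u : Sph u -> u != 0.
Proof. rewrite /Sph /= => Su; apply/eqP => u0; move: Su; rewrite u0 normr0 => /eqP; by rewrite eq_sym oner_eq0. Qed.

Lemma Sph_nonempty : Sph !=set0.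
Proof.
set e0 : V := 'e_0.
have e0n : e0 != 0.
  apply/eqP => h; have := congr1 (fun m : V => m 0 0) h; rewrite !mxE eqxx /=.
  by move/eqP; rewrite oner_eq0.
exists (`|e0|^-1 *: e0); rewrite /Sph /= normrZ ger0_norm ?invr_ge0 ?normr_ge0 //.
by rewrite mulVf // normr_eq0.
Qed.

Definition H (u : V) := L u / Nt u.

Lemma H_scale (k : R) u : 0 < k -> H (k *: u) = H u.
Proof.
move=> k0; rewrite /H LZ NtZ gtr0_norm // invfM mulrACA mulfV ?gt_eqF // mul1r //.
Qed.

Lemma H_cont : {within Sph, continuous H}.
Proof.
apply: continuous_in_subspaceT => u; rewrite inE => Su.
rewrite /H; apply: (@cvgM _ _ _ (nbhs_filter u)); first exact: L_cont.
apply: (@cvgV _ _ _ (nbhs_filter u)); last exact: Nt_cont.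
by rewrite gt_eqF // Ntpos // Sph_neq0.
Qed.

Lemma attain : exists s : V, Nt s <= 1 /\ 0 <= L s /\ forall u, L u <= L s * Nt u.
Proof.
have [c cS cmax] := EVT_max_rV Sph_nonempty Sph_compact H_cont.
have cS' : Sph c by rewrite inE in cS.
have Nc : 0 < Nt c by apply: Ntpos; apply: Sph_neq0.
have Ls : L ((Nt c)^-1 *: c) = H c by rewrite LZ /H mulrC.
exists ((Nt c)^-1 *: c); rewrite NtZ gtr0_norm ?invr_gt0 // mulVf ?gt_eqF // Ls; split => //.
split.
  have mc : Sph (- c) by rewrite /Sph /= normrN.
  have := cmax (- c); rewrite inE => /(_ mc).
  rewrite /H -scaleN1r LZ NtZ normrN normr1 mul1r mulN1r mulNr.
  move=> h; lra.
move=> u; have [->|u0] := eqVneq u 0; first by rewrite L0 Nt0 mulr0.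
have un : 0 < `|u| by rewrite normr_gt0.
have wS : Sph (`|u|^-1 *: u).
  by rewrite /Sph /= normrZ ger0_norm ?invr_ge0 ?normr_ge0 // mulVf // gt_eqF.
have := cmax _ (mem_set wS); rewrite H_scale ?invr_gt0 // /H.
by rewrite ler_pdivrMr // Ntpos.
Qed.
End Attain.

Definition fin2ord {n} (i : Fin.t n) : 'I_n :=
  Ordinal (introT ssrnat.ltP (proj2_sig (Fin.to_nat i))).
Definition ord2fin {n} (j : 'I_n) : Fin.t n := Fin.of_nat_lt (elimT ssrnat.ltP (ltn_ord j)).

Lemma ord2fin_fin2ord n (i : Fin.t n) : ord2fin (fin2ord i) = i.
Proof.
rewrite /ord2fin /fin2ord /=.
rewrite -[RHS](Fin.of_nat_to_nat_inv i); exact: Fin.of_nat_ext.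
Qed.

Lemma fin2ord_ord2fin n (j : 'I_n) : fin2ord (ord2fin j) = j.
Proof.
apply: val_inj; rewrite /= /ord2fin. by rewrite Fin.to_nat_of_nat.
Qed.

Definition psi {n} (u : 'rV[R]_n) : Vec n := fun i => u ord0 (fin2ord i).
Definition phi {n} (x : Vec n) : 'rV[R]_n := \row_j x (ord2fin j).

Lemma psi_phi n (x : Vec n) : psi (phi x) = x.
Proof. apply: functional_extensionality => i; by rewrite /psi /phi mxE ord2fin_fin2ord. Qed.

Lemma bridge (m : nat) (N : Vec m.+1 -> R) (g : Vec m.+1) : is_norm N ->
  exists s, Rle (N s) 1 /\ (forall x, Rle (N x) 1 -> Rle (pair g x) (pair g s)).
Proof.
move=> [N0 [Ndef [Nhom Ntri]]].
pose Nt := fun u : 'rV[R]_m.+1 => N (psi u).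
pose L := fun u : 'rV[R]_m.+1 => pair g (psi u).
have psiD u v : psi (u + v) = vadd (psi u) (psi v).
  by apply: functional_extensionality => i; rewrite /psi /vadd !mxE.
have psiZ (c : R) u : psi (c *: u) = vscal c (psi u).
  by apply: functional_extensionality => i; rewrite /psi /vscal !mxE.
have NtD u v : Nt (u + v) <= Nt u + Nt v by rewrite /Nt psiD; apply/RleP; apply: Ntri.
have NtZ (c : R) u : Nt (c *: u) = `|c| * Nt u by rewrite /Nt psiZ Nhom.
have Ntpos u : u != 0 -> 0 < Nt u.
  move=> u0; rewrite lt_neqAle; apply/andP; split; last by apply/RleP; apply: N0.
  apply/eqP => h; move: u0; rewrite /Nt in h.
  have := Ndef _ (esym h) => hz; apply/negP; rewrite negbK; apply/eqP/rowP => j.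
  have := congr1 (fun f => f (ord2fin j)) hz; rewrite /psi fin2ord_ord2fin /vzero mxE => ->.
  by [].
have LD u v : L (u + v) = L u + L v by rewrite /L psiD pair_add_r.
have LZ (c : R) u : L (c *: u) = c * L u by rewrite /L psiZ pair_scal_r.
have [s [Ns [Ls Lmax]]] := @attain R m Nt L NtD NtZ Ntpos LD LZ.
exists (psi s); split; first by apply/RleP.
move=> x Nx; have := Lmax (phi x); rewrite /L /Nt psi_phi => /RleP h.
apply: (Rle_trans _ _ _ h).
have Ls' : Rle 0 (pair g (psi s)) by apply/RleP.
rewrite -[X in Rle _ X]Rmult_1_r; by apply: Rmult_le_compat_l.
Qed.
End AM.

Lemma dual_ok n (N : Vec n -> R) : is_norm N -> DualOK N.
Proof.
  intros HN g. unfold dnorm. apply epsilon_spec.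
  destruct n as [|m].
  - exists 0. split.
    + exists vzero. split.
      * rewrite N_zero by auto. lra.
      * reflexivity.
    + intros x _. unfold pair. simpl. lra.
  - destruct (AM.bridge m N g HN) as [s [Hs Hm]].
    exists (pair g s). split.
    + exists s. split; auto.
    + exact Hm.
Qed.

Theorem mainTheorem9 (n : nat) (N : Vec n -> R) (f : Vec n -> R) (D : Vec n -> Vec n)
  (sharp : Vec n -> Vec n) (d : Vec n -> R) (Dd : Vec n -> Vec n) (eps : R)
  (x v y : nat -> Vec n) (beta h a A : nat -> R) (psi : nat -> Vec n -> R) :
  is_norm N ->
  is_sharp N sharp ->
  prox_fun N d Dd ->
  ((convex f /\ forall z, is_subgrad f z (D z)) \/ C1_grad N f D) ->
  0 < eps ->
  UAGMsDR_run N f D sharp d Dd eps x v y beta h a A psi ->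
  (forall k, D (y k) <> vzero) ->
  forall k : nat,
    (A k * f (x k) <= psi k (v k) + A k * eps / 2 /\
     (forall z, psi k (v k) <= psi k z)) /\
    (forall nu M, 0 <= nu <= 1 -> 0 < M -> holder N D nu M ->
       c_nu nu * hpow (INR k) ((1 + 3 * nu) / (1 + nu))
         * Rpower eps ((1 - nu) / (1 + nu))
         / (Rpower 2 ((1 + 3 * nu) / (1 + nu)) * Rpower M (2 / (1 + nu)))
       <= A k).
Proof.
  intros HN Hsh Hprox Hcase Heps Hrun Hnz k.
  pose proof (dual_ok n N HN) as Hd.
  split; [split|].
  - eapply part1; eauto.
  - eapply v_min; eauto.
  - intros nu M Hnu HM Hhol. eapply part2; eauto.
Qed.
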